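(* Let $(\Lambda,d)$ be a $k$-graph and let $(\overline{\Lambda},\overline d)$ be the extension described in the context. Then $\overline{\Lambda}$ with $\overline d$ satisfies the factorization property: for every morphism $f$ of $\overline{\Lambda}$ and $a,b\in\mathbb{N}^k$ with $\overline d(f)=a+b$ there exist unique morphisms $g,h$ of $\overline{\Lambda}$ with $f=gh$, $\overline d(g)=a$ and $\overline d(h)=b$.
   Context: A $k$-graph $(\Lambda,d)$ is a countable category with a degree functor $d:\Lambda\to\mathbb{N}^k$ satisfying unique factorization; $\Lambda^0$ vertices, $r,s$ range/source, $v\Lambda^n=\{\lambda:r(\lambda)=v,d(\lambda)=n\}$; $e_i$ standard basis, $\le$ coordinatewise, $\vee,\wedge$ coordinatewise max/min. For $m\in(\mathbb{N}\cup\{\infty\})^k$, $\Omega_{k,m}$ has objects $\{p\in\mathbb{N}^k:p\le m\}$, morphisms $(p,q)$, $p\le q\le m$, $r(p,q)=p$, $s(p,q)=q$, $d(p,q)=q-p$. A graph morphism $x:\Omega_{k,m}\to\Lambda$ is a degree-preserving functor; $d(x)=m$, $x(a,b)=x((a,b))$, $x(a)=x(a,a)$. It is a boundary path if there is $n_x\in\mathbb{N}^k$, $n_x\le d(x)$, with $x(p)\Lambda^{e_i}=\emptyset$ whenever $p\in\mathbb{N}^k$, $n_x\le p\le d(x)$, $p_i=d(x)_i$; $\Lambda^{\le\infty}$ is the set of boundary paths. $\sigma^px(a,b)=x(a+p,b+p)$ ($p\le d(x)$); $\lambda x$ denotes concatenation of $\lambda$ (with $s(\lambda)=x(0)$) in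 front of $x$, a graph morphism on $\Omega_{k,d(\lambda)+d(x)}$. $V_\Lambda=\{(x;m):x\in\Lambda^{\le\infty},m\in\mathbb{N}^k,m\not\le d(x)\}$, $(x;m)\approx(y;p)$ iff $x(m\wedge d(x))=y(p\wedge d(y))$ and $m-m\wedge d(x)=p-p\wedge d(y)$; classes $[x;m]$ form $\widetilde{V_\Lambda}$. $P_\Lambda=\{(x;(m,n)):x\in\Lambda^{\le\infty},m\le n\in\mathbb{N}^k,n\not\le d(x)\}$, $(x;(m,n))\sim(y;(p,q))$ iff $x(m\wedge d(x),n\wedge d(x))=y(p\wedge d(y),q\wedge d(y))$, $m-m\wedge d(x)=p-p\wedge d(y)$, $n-m=q-p$; classes $[x;(m,n)]$ form $\widetilde{P_\Lambda}$. The extension $\overline{\Lambda}$ is the category with objects $\Lambda^0\sqcup\widetilde{V_\Lambda}$ and morphisms $\Lambda\sqcup\widetilde{P_\Lambda}$: on $\Lambda$ everything is as in $\Lambda$; $\overline r([x;(m,n)])=x(m)$ if $m\le d(x)$, else $[x;m]$; $\overline s([x;(m,n)])=[x;n]$; identity at $[x;m]$ is $[x;(m,m)]$; $\lambda[x;(m,n)]=[\lambda\sigma^mx;(0,d(\lambda)+n-m)]$ when $s(\lambda)=\overline r([x;(m,n)])$; $[x;(m,n)][y;(p,q)]=[z;(m,n+q-p)]$ with $z=x(0,n\wedge d(x))\sigma^{p\wedge d(y)}y$ when $\overline s([x;(m,n)])=\overline r([y;(p,q)])$. The degree is $\overline d|_\Lambda=d$ and $\overline d([x;(m,n)])=n-m$.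 *)

(* Defs.v *)
From Stdlib Require Import ClassicalEpsilon.
From mathcomp Require Import all_boot.
Set Implicit Arguments. Unset Strict Implicit. Unset Printing Implicit Defensive.

Definition Nk (k : nat) := 'I_k -> nat.
(* None stands for infinity *)
Definition Nki (k : nat) := 'I_k -> option nat.

Definition zerok (k : nat) : Nk k := fun _ => 0.
Definition addk k (a b : Nk k) : Nk k := fun i => a i + b i.
Definition subk k (a b : Nk k) : Nk k := fun i => a i - b i.
Definition joink k (a b : Nk k) : Nk k := fun i => maxn (a i) (b i).
Definition lek k (a b : Nk k) : bool := [forall i, a i <= b i].
Definition unitk k (i : 'I_k) : Nk k := fun j => nat_of_bool (j == i).
Definition lei k (p : Nk k) (m : Nki k) : bool :=
  [forall i, if m i is Some mi then p i <= mi else true].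
Definition meeti k (p : Nk k) (m : Nki k) : Nk k :=
  fun i => if m i is Some mi then minn (p i) mi else p i.
Definition addi k (a : Nk k) (m : Nki k) : Nki k := fun i => omap (addn (a i)) (m i).
Definition subi k (m : Nki k) (a : Nk k) : Nki k := fun i => omap (fun mi => mi - a i) (m i).

(* comp f g is the composite "f g" (defined when src f = rng g);
   rng (f g) = rng f, src (f g) = src g. *)
Record kgraph (k : nat) := KGraph {
  Obj : Type;
  Mor : Type;
  rng : Mor -> Obj;
  src : Mor -> Obj;
  idm : Obj -> Mor;
  comp : Mor -> Mor -> Mor;
  deg : Mor -> Nk k;
  obj_countable : exists c : Obj -> nat, injective c;
  mor_countable : exists c : Mor -> nat, injective c;
  rng_idm : forall v, rng (idm v) = v;
  src_idm : forall v, src (idm v) = v;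
  comp_idl : forall f, comp (idm (rng f)) f = f;
  comp_idr : forall f, comp f (idm (src f)) = f;
  rng_comp : forall f g, src f = rng g -> rng (comp f g) = rng f;
  src_comp : forall f g, src f = rng g -> src (comp f g) = src g;
  compA : forall f g h, src f = rng g -> src g = rng h ->
    comp f (comp g h) = comp (comp f g) h;
  deg_idm : forall v, deg (idm v) = @zerok k;
  deg_comp : forall f g, src f = rng g -> deg (comp f g) = addk (deg f) (deg g);
  unique_fact : forall l m n, deg l = addk m n ->
    exists mu nu, [/\ src mu = rng nu, comp mu nu = l, deg mu = m & deg nu = n] /\
      forall mu' nu', src mu' = rng nu' -> comp mu' nu' = l -> deg mu' = m ->
        deg nu' = n -> mu' = mu /\ nu' = nu
}.

Arguments rng {k L} : rename.
Arguments src {k L} : rename.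
Arguments idm {k L} : rename.
Arguments comp {k L} : rename.
Arguments deg {k L} : rename.

Section Ext.
Context {k : nat} (L : kgraph k).

(* pdeg x = m = d(x);  pmap x p q = x(p,q) (only meaningful for p <= q <= m) *)
Record kpath := KPath { pdeg : Nki k; pmap : Nk k -> Nk k -> Mor L }.

Definition pv (x : kpath) (p : Nk k) : Obj L := rng (pmap x p p).

Definition is_graph_morphism (x : kpath) : Prop :=
  forall p q t, lek p q -> lek q t -> lei t (pdeg x) ->
    [/\ deg (pmap x p q) = subk q p,
        rng (pmap x p q) = pv x p,
        src (pmap x p q) = pv x q,
        pmap x p p = idm (pv x p)
      & comp (pmap x p q) (pmap x q t) = pmap x p t].

Definition is_boundary_path (x : kpath) : Prop :=
  is_graph_morphism x /\
  exists nx : Nk k, lei nx (pdeg x) /\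
    forall p : Nk k, lek nx p -> lei p (pdeg x) ->
      forall i : 'I_k, pdeg x i = Some (p i) ->
        forall l : Mor L, rng l = pv x p -> deg l <> unitk i.

Definition seg (w : Mor L) (p q : Nk k) : Mor L :=
  epsilon (inhabits w) (fun mu => exists al be,
    [/\ src al = rng mu, src mu = rng be, comp al (comp mu be) = w,
        deg al = p & deg mu = subk q p]).

Definition shift (x : kpath) (p : Nk k) : kpath :=
  KPath (subi (pdeg x) p) (fun a b => pmap x (addk a p) (addk b p)).

(* concatenation l x  (s(l) = x(0)):  (l x)(p,q) is the segment (p,q) of
   l x(0, (q \/ d(l)) - d(l)) *)
Definition concat (l : Mor L) (x : kpath) : kpath :=
  KPath (addi (deg l) (pdeg x))
    (fun p q => seg (comp l (pmap x (@zerok k) (subk (joink q (deg l)) (deg l)))) p q).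

Definition inV (x : kpath) (m : Nk k) : Prop := is_boundary_path x /\ ~~ lei m (pdeg x).
Definition equivV (x : kpath) (m : Nk k) (y : kpath) (p : Nk k) : Prop :=
  pv x (meeti m (pdeg x)) = pv y (meeti p (pdeg y)) /\
  subk m (meeti m (pdeg x)) = subk p (meeti p (pdeg y)).

Definition inP (x : kpath) (m n : Nk k) : Prop :=
  is_boundary_path x /\ lek m n /\ ~~ lei n (pdeg x).
Definition equivP (x : kpath) (m n : Nk k) (y : kpath) (p q : Nk k) : Prop :=
  [/\ pmap x (meeti m (pdeg x)) (meeti n (pdeg x)) =
        pmap y (meeti p (pdeg y)) (meeti q (pdeg y)),
      subk m (meeti m (pdeg x)) = subk p (meeti p (pdeg y))
    & subk n m = subk q p].

Inductive Obar := OL of Obj L | OV of kpath & Nk k.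
Inductive Mbar := ML of Mor L | MP of kpath & Nk k & Nk k.

(* equality of objects / morphisms of Lambda-bar (equality of classes) *)
Definition obar_eq (u v : Obar) : Prop :=
  match u, v with
  | OL a, OL b => a = b
  | OV x m, OV y p => equivV x m y p
  | _, _ => False
  end.
Definition mbar_eq (f g : Mbar) : Prop :=
  match f, g with
  | ML a, ML b => a = b
  | MP x m n, MP y p q => equivP x m n y p q
  | _, _ => False
  end.

Definition mbar_valid (f : Mbar) : Prop :=
  match f with ML _ => True | MP x m n => inP x m n end.

Definition rbar (f : Mbar) : Obar :=
  match f with
  | ML l => OL (rng l)
  | MP x m n => if lei m (pdeg x) then OL (pv x m) else OV x m
  end.
Definition sbar (f : Mbar) : Obar :=
  match f with
  | ML l => OL (src l)
  | MP x m n => OV x n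
  end.
Definition dbar (f : Mbar) : Nk k :=
  match f with
  | ML l => deg l
  | MP x m n => subk n m
  end.

Definition composable (g h : Mbar) : Prop := obar_eq (sbar g) (rbar h).

Definition compbar (g h : Mbar) : Mbar :=
  match g, h with
  | ML l, ML l' => ML (comp l l')
  | ML l, MP x m n => MP (concat l (shift x m)) (@zerok k) (subk (addk (deg l) n) m)
  | MP x m n, MP y p q =>
      MP (concat (pmap x (@zerok k) (meeti n (pdeg x))) (shift y (meeti p (pdeg y))))
         m (subk (addk n q) p)
  | MP _ _ _, ML _ => g (* never composable *)
  end.

End Ext.

(* Main.v *)
Require Import Defs.
From Stdlib Require Import ClassicalEpsilon FunctionalExtensionality.
From mathcomp Require Import all_boot zify.
Set Implicit Arguments. Unset Strict Implicit. Unset Printing Implicit Defensive.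

Notation pm := Defs.pmap.
Notation cmp := Defs.comp.

Ltac wipe := repeat match goal with H : _ |- _ => clear H end.
Ltac plia := wipe; lia.
Ltac unf := rewrite /=; unfold addk, subk, meeti, addi, subi, zerok, joink; rewrite /= ?addn0 ?subn0.

Definition mo (x : nat) (o : option nat) := if o is Some v then minn x v else x.
Definition dzf (N s : nat) (Y : option nat) := omap (addn N) (omap (fun v => v - s) Y).

Ltac elim_min := repeat match goal with |- context[minn ?a ?b] => case: (leqP a b) => ? end.
Ltac hlia := repeat match goal with H : context[minn _ _] |- _ => revert H end; elim_min; lia.

Lemma arPP m n a b m' n' p q X' Y X :
  m <= n -> n - m = a + b -> m' <= n' -> p <= q -> n' - m' = a -> q - p = b ->
  n' - mo n' X' = p - mo p Y ->
  m' - mo m' (dzf (mo n' X') (mo p Y) Y) = m - mo m X ->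
  [/\ mo m' (dzf (mo n' X') (mo p Y) Y) <= mo n' X',
      mo n' X' <= mo (n' + q - p) (dzf (mo n' X') (mo p Y) Y),
      ((if Y is Some w then mo (n' + q - p) (dzf (mo n' X') (mo p Y) Y) - mo n' X' + mo p Y <= w else true) : bool),
      mo m' X' = mo m' (dzf (mo n' X') (mo p Y) Y) &
      mo q Y = mo (n' + q - p) (dzf (mo n' X') (mo p Y) Y) - mo n' X' + mo p Y /\
      ((mo n' X' - mo m' (dzf (mo n' X') (mo p Y) Y)) +
        (mo (n' + q - p) (dzf (mo n' X') (mo p Y) Y) - mo n' X' + mo p Y - mo p Y)
        = mo n X - mo m X ->
      [/\ mo n' X' - mo m' (dzf (mo n' X') (mo p Y) Y) = mo (m + a) X - mo m X,
          p - mo p Y = m + a - mo (m + a) X &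
          ~~ (if X' is Some v then n' <= v else true) ->
          ~~ (if X is Some w then m + a <= w else true)])].
Proof.
move=> h1 h2 h3 h4 h5 h6 eV E2.
have h7 : n' = m' + a by lia.
have h8 : q = p + b by lia.
have h9 : n = m + (a + b) by lia.
subst n' q n; clear h2 h5 h6 h1 h3 h4.
have -> : m' + a + (p + b) - p = m' + a + b by lia.
move: eV E2.
case: X' => [v|]; case: Y => [w|]; rewrite /mo /dzf /=.
- case: (leqP (m' + a) v) => nv.
  + rewrite subnn => eV.
    have pw : p <= w by move: eV; lia.
    rewrite (minn_idPl pw) subnn (minn_idPl (leq_trans (leq_addr a m') (leq_addr _ _))) => E2.
    clear eV.
    case: X E2 => [u|] /= E2; (split; [hlia|hlia|hlia|hlia|split; [hlia|move=> dg; split; [hlia|hlia|first [done|hlia]]]]).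
  + move=> eV.
    have wp : w < p by move: eV nv; lia.
    rewrite (minn_idPr (ltnW wp)) subnn addn0.
    have -> : minn (m' + a + b) v = v by lia.
    move=> E2.
    case: X E2 => [u|] /= E2; (split; [hlia|hlia|hlia|hlia|split; [hlia|move=> dg; split; [hlia|hlia|first [done|hlia]]]]).
- move=> eV. have nv : m' + a <= v by move: eV; lia.
  rewrite (minn_idPl nv) subnn => E2. clear eV.
  case: X E2 => [u|] /= E2; (split; [hlia|hlia|hlia|hlia|split; [hlia|move=> dg; split; [hlia|hlia|first [done|hlia]]]]).
- move=> eV. have pw : p <= w by move: eV; lia.
  rewrite (minn_idPl pw) subnn (minn_idPl (leq_trans (leq_addr a m') (leq_addr _ _))) => E2.
  clear eV.
  case: X E2 => [u|] /= E2; (split; [hlia|hlia|hlia|hlia|split; [hlia|move=> dg; split; [hlia|hlia|first [done|hlia]]]]).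
- move=> _ E2.
  case: X E2 => [u|] /= E2; (split; [hlia|hlia|hlia|hlia|split; [hlia|move=> dg; split; [hlia|hlia|first [done|hlia]]]]).
Qed.

Section Aux.
Context {k : nat} (L : kgraph k).

Lemma funk (a b : Nk k) : (forall i, a i = b i) -> a = b.
Proof. move=> h; exact: functional_extensionality h. Qed.

Lemma lekP (p q : Nk k) : reflect (forall i, p i <= q i) (lek p q).
Proof. exact: forallP. Qed.

Lemma leiP (p : Nk k) (m : Nki k) :
  reflect (forall i, if m i is Some mi then p i <= mi else true) (lei p m).
Proof. exact: forallP. Qed.

Lemma pw (a b : Nk k) : a = b -> forall i, a i = b i.
Proof. by move=> ->. Qed.

Lemma deg0_id (f : Mor L) : deg f = @zerok k -> f = idm (rng f).
Proof.
move=> h.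
have D : deg f = addk (@zerok k) (@zerok k) by rewrite h; apply: funk.
have [mu [nu [_ U]]] := unique_fact D.
have [e1 _] := U f (idm (src f)) (esym (rng_idm _)) (comp_idr _) h (deg_idm _).
have [e2 _] := U (idm (rng f)) f (src_idm _) (comp_idl _) (deg_idm _) h.
by rewrite {1}e1 -e2.
Qed.

Lemma uniq2 (f g f' g' : Mor L) : src f = rng g -> src f' = rng g' ->
  cmp f g = cmp f' g' -> deg f = deg f' -> f = f' /\ g = g'.
Proof.
move=> h1 h2 e d.
have D : deg (cmp f g) = addk (deg f) (deg g) by rewrite deg_comp.
have [mu [nu [_ U]]] := unique_fact D.
have [-> ->] := U f g h1 erefl erefl erefl.
have dg : deg g' = deg g.
  have := deg_comp h2; rewrite -e D d => E; apply: funk => i.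
  have := pw E i; rewrite /addk; plia.
by have [-> ->] := U f' g' h2 (esym e) (esym d) dg.
Qed.

Lemma seg_eq (w al mu be : Mor L) p q :
  src al = rng mu -> src mu = rng be -> cmp al (cmp mu be) = w ->
  deg al = p -> deg mu = subk q p -> seg w p q = mu.
Proof.
move=> h1 h2 e dal dmu.
have := epsilon_spec (inhabits w) (fun mu => exists al be, [/\ src al = rng mu,
   src mu = rng be, cmp al (cmp mu be) = w, deg al = p & deg mu = subk q p]).
rewrite -/(seg w p q).
case; first by exists mu, al, be.
move=> al' [be' [h1' h2' e' dal' dmu']].
have r1 : src al = rng (cmp mu be) by rewrite rng_comp.
have r2 : src al' = rng (cmp (seg w p q) be') by rewrite rng_comp.
have [_ E] := uniq2 r1 r2 (etrans e (esym e')) (etrans dal (esym dal')).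
have [-> _] := uniq2 h2 h2' E (etrans dmu (esym dmu')).
done.
Qed.

Lemma lei_trans (q t : Nk k) m : lek q t -> lei t m -> lei q m.
Proof.
move=> /lekP h /leiP h2; apply/leiP => i; move: (h i) (h2 i).
by case: (m i) => // v; plia.
Qed.

Lemma lek_refl (p : Nk k) : lek p p.
Proof. by apply/lekP. Qed.

Section GM.
Variable (x : kpath L).
Hypothesis gx : is_graph_morphism x.

Lemma gm_deg p q : lek p q -> lei q (pdeg x) -> deg (pm x p q) = subk q p.
Proof. move=> h1 h2; by case: (gx h1 (lek_refl q) h2). Qed.
Lemma gm_src p q : lek p q -> lei q (pdeg x) -> src (pm x p q) = pv x q.
Proof. move=> h1 h2; by case: (gx h1 (lek_refl q) h2). Qed.
Lemma gm_rng p q : lek p q -> lei q (pdeg x) -> rng (pm x p q) = pv x p.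
Proof. move=> h1 h2; by case: (gx h1 (lek_refl q) h2). Qed.
Lemma gm_comp p q t : lek p q -> lek q t -> lei t (pdeg x) ->
   cmp (pm x p q) (pm x q t) = pm x p t.
Proof. move=> h1 h2 h3; by case: (gx h1 h2 h3). Qed.
End GM.

Lemma concat_pmap (u u1 u2 : Mor L) (y : kpath L) (s A B : Nk k) :
  is_graph_morphism y -> src u1 = rng u2 -> cmp u1 u2 = u -> src u2 = pv y s ->
  deg u1 = A -> lek (deg u) B -> lei (addk (subk B (deg u)) s) (pdeg y) ->
  pm (concat u (shift y s)) A B = cmp u2 (pm y s (addk (subk B (deg u)) s)).
Proof.
move=> gy h1 e h2 d1 /lekP uB yB.
rewrite /concat /shift /=.
have -> : joink B (deg u) = B by apply: funk => i; rewrite /joink; move: (uB i); plia.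
have -> : addk (@zerok k) s = s by apply: funk.
have ss : lek s (addk (subk B (deg u)) s) by apply/lekP => i; rewrite /addk; plia.
have r2 : src u2 = rng (pm y s (addk (subk B (deg u)) s)) by rewrite gm_rng.
apply: (@seg_eq _ u1 _ (idm (src (cmp u2 (pm y s (addk (subk B (deg u)) s)))))).
- by rewrite rng_comp.
- by rewrite rng_idm.
- by rewrite comp_idr Defs.compA // e.
- done.
- rewrite deg_comp // gm_deg //; apply: funk => i.
  have du := pw (congr1 deg (esym e)) i; rewrite deg_comp // d1 in du.
  move: du (uB i); rewrite /addk /subk; plia.
Qed.



Lemma meeti_le (p : Nk k) m : lei p m -> meeti p m = p.
Proof. move/leiP=> h; apply: funk => i; move: (h i); rewrite /meeti; case: (m i) => //= v; plia. Qed.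

Lemma meeti_le' (p : Nk k) m : lei (meeti p m) m.
Proof. apply/leiP => i; rewrite /meeti; case: (m i) => //= v; plia. Qed.

Lemma exists_ML (x : kpath L) m n a b : is_boundary_path x -> lek m n ->
  ~~ lei n (pdeg x) -> subk n m = addk a b -> lei (addk m a) (pdeg x) ->
  [/\ mbar_valid (ML (pm x m (addk m a))) /\ mbar_valid (MP x (addk m a) n),
     composable (ML (pm x m (addk m a))) (MP x (addk m a) n),
     mbar_eq (compbar (ML (pm x m (addk m a))) (MP x (addk m a) n)) (MP x m n),
     dbar (ML (pm x m (addk m a))) = a & dbar (MP x (addk m a) n) = b].
Proof.
move=> bx /lekP mn nd D Hma.
have gx := bx.1.
have D' := pw D.
have mma : lek m (addk m a) by apply/lekP => i; unf; plia.
have man : lek (addk m a) n by apply/lekP => i; move: (mn i) (D' i); unf; plia.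
have du : deg (pm x m (addk m a)) = a.
  by rewrite gm_deg //; apply: funk => i; unf; plia.
split.
- by split => //; split => //.
- by rewrite /composable /= Hma gm_src.
- have dz : pdeg (concat (pm x m (addk m a)) (shift x (addk m a))) = addi a (subi (pdeg x) (addk m a)) by rewrite /= du.
  rewrite /mbar_eq /compbar; unfold Defs.equivP; rewrite dz.
  have mdx : lei m (pdeg x) by apply: lei_trans Hma.
  move/leiP: (Hma) => Hma'.
  have hA : meeti (@zerok k) (addi a (subi (pdeg x) (addk m a))) = @zerok k.
    by apply: funk => i; unf; case: (pdeg x i) => [v|] /=; plia.
  rewrite hA (meeti_le mdx) du.
  have hB : meeti (subk (addk a n) (addk m a)) (addi a (subi (pdeg x) (addk m a))) = subk (meeti n (pdeg x)) m.
    apply: funk => i; move: (Hma' i) (mn i) (D' i); unf; case: (pdeg x i) => /= [v|]; plia.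
  rewrite hB.
  have H1 : lek (deg (pm x m (addk m a))) (subk (meeti n (pdeg x)) m).
    rewrite du; apply/lekP => i; move: (Hma' i) (mn i) (D' i); unf; case: (pdeg x i) => /= [v|]; plia.
  have H2 : lei (addk (subk (subk (meeti n (pdeg x)) m) (deg (pm x m (addk m a)))) (addk m a)) (pdeg x).
    rewrite du; apply/leiP => i; move: (Hma' i) (mn i) (D' i); unf; case: (pdeg x i) => /= [v|]; plia.
  have CP := @concat_pmap (pm x m (addk m a)) (idm (rng (pm x m (addk m a)))) (pm x m (addk m a))
     x (addk m a) (@zerok k) (subk (meeti n (pdeg x)) m) gx (src_idm _) (comp_idl _) (gm_src gx mma Hma) (deg_idm _) H1 H2.
  rewrite CP du.
  have -> : addk (subk (subk (meeti n (pdeg x)) m) a) (addk m a) = meeti n (pdeg x).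
    apply: funk => i; move: (Hma' i) (mn i) (D' i); unf; case: (pdeg x i) => /= [v|]; plia.
  split.
  * apply: gm_comp => //; last exact: meeti_le'.
    apply/lekP => i; move: (Hma' i) (mn i) (D' i); unf; case: (pdeg x i) => /= [v|]; plia.
  * by apply: funk => i; unf; plia.
  * by apply: funk => i; move: (mn i) (D' i); unf; plia.
- by [].
- by apply: funk => i; move: (mn i) (D' i); unf; plia.
Qed.


Lemma exists_PP (x : kpath L) m n a b : is_boundary_path x -> lek m n ->
  ~~ lei n (pdeg x) -> subk n m = addk a b -> ~~ lei (addk m a) (pdeg x) ->
  [/\ mbar_valid (MP x m (addk m a)) /\ mbar_valid (MP x (addk m a) n),
     composable (MP x m (addk m a)) (MP x (addk m a) n),
     mbar_eq (compbar (MP x m (addk m a)) (MP x (addk m a) n)) (MP x m n),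
     dbar (MP x m (addk m a)) = a & dbar (MP x (addk m a) n) = b].
Proof.
move=> bx /lekP mn nd D Hma.
have gx := bx.1.
have D' := pw D.
have mma : lek m (addk m a) by apply/lekP => i; unf; plia.
have man : lek (addk m a) n by apply/lekP => i; move: (mn i) (D' i); unf; plia.
split.
- split; split => //; split => //; by apply/lekP => i; move: (mn i) (D' i); unf; plia.
- by rewrite /composable /= (negbTE Hma).
- set R := meeti (addk m a) (pdeg x).
  have R0 : lek (@zerok k) R by apply/lekP => i; unf.
  have Rdx : lei R (pdeg x) by exact: meeti_le'.
  have du : deg (pm x (@zerok k) R) = R.
    by rewrite (gm_deg gx R0 Rdx); apply: funk => i; unf.
  have dz : pdeg (concat (pm x (@zerok k) R) (shift x R)) = pdeg x.
    rewrite /= du; apply: functional_extensionality => i; rewrite /R; unf; case: (pdeg x i) => //= v; congr Some; plia.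
  rewrite /mbar_eq /compbar; unfold Defs.equivP; rewrite dz.
  have -> : subk (addk (addk m a) n) (addk m a) = n by apply: funk => i; unf; plia.
  set M := meeti m (pdeg x). set Nn := meeti n (pdeg x).
  have MR : lek M R by apply/lekP => i; rewrite /M /R; unf; case: (pdeg x i) => [v|] /=; plia.
  have RN : lek R Nn by apply/lekP => i; move: (mn i) (D' i); rewrite /Nn /R; unf; case: (pdeg x i) => [v|] /=; plia.
  have H1 : lek (deg (pm x (@zerok k) R)) Nn by rewrite du.
  have H2 : lei (addk (subk Nn (deg (pm x (@zerok k) R))) R) (pdeg x).
    rewrite du (_ : addk (subk Nn R) R = Nn); first exact: meeti_le'.
    by apply: funk => i; move/lekP: RN => /(_ i); unf; plia.
  have M0 : lek (@zerok k) M by apply/lekP => i; unf.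
  have Mdx : lei M (pdeg x) by exact: meeti_le'.
  have CP := @concat_pmap (pm x (@zerok k) R) (pm x (@zerok k) M) (pm x M R) x R M Nn gx
    (etrans (gm_src gx M0 Mdx) (esym (gm_rng gx MR Rdx))) (gm_comp gx M0 MR Rdx)
    (gm_src gx MR Rdx) (etrans (gm_deg gx M0 Mdx) (funk (fun i => subn0 _))) H1 H2.
  rewrite CP du (_ : addk (subk Nn R) R = Nn); last first.
    by apply: funk => i; move/lekP: RN => /(_ i); unf; plia.
  split => //; first exact: gm_comp (meeti_le' _ _).
- by apply: funk => i; unf; plia.
- by apply: funk => i; move: (mn i) (D' i); unf; plia.
Qed.


Lemma uniq_LP (x y : kpath L) (l : Mor L) m n a b p q :
  is_graph_morphism x -> is_graph_morphism y -> lek m n -> subk n m = addk a b ->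
  lek p q -> lei p (pdeg y) -> src l = pv y p -> deg l = a -> subk q p = b ->
  Defs.equivP (concat l (shift y p)) (@zerok k) (subk (addk (deg l) q) p) x m n ->
  [/\ lei (addk m a) (pdeg x), l = pm x m (addk m a) & Defs.equivP y p q x (addk m a) n].
Proof.
move=> gx gy /lekP mn D /lekP pq pdy sl dl Hb [E1 E2 E3].
have D' := pw D; have Hb' := pw Hb.
have dz : pdeg (concat l (shift y p)) = addi a (subi (pdeg y) p) by rewrite /= dl.
rewrite dz dl in E1 E2.
have Z0 : meeti (@zerok k) (addi a (subi (pdeg y) p)) = @zerok k.
  by apply: funk => i; unf; case: (pdeg y i) => [v|] /=; plia.
rewrite Z0 in E1 E2.
have E2' := pw E2.
move/leiP: (pdy) => pdy'.
set B := meeti (subk (addk a q) p) (addi a (subi (pdeg y) p)) in E1.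
have H1 : lek (deg l) B.
  rewrite dl; apply/lekP => i; move: (pq i) (pdy' i); rewrite /B; unf; case: (pdeg y i) => [v|] /=; plia.
have H2 : lei (addk (subk B (deg l)) p) (pdeg y).
  rewrite dl; apply/leiP => i; move: (pq i) (pdy' i); rewrite /B; unf; case: (pdeg y i) => [v|] /=; plia.
have CP := @concat_pmap l (idm (rng l)) l y p (@zerok k) B gy (src_idm _) (comp_idl _) sl (deg_idm _) H1 H2.
rewrite CP dl in E1.
rewrite dl in H2.
set Y := addk (subk B a) p in E1 H2.
have py : lek p Y by apply/lekP => i; rewrite /Y; unf; plia.
have mdx : lei m (pdeg x).
  apply/leiP => i; move: (E2' i); unf; case: (pdeg x i) => [v|] /=; plia.
rewrite (meeti_le mdx) in E1.
have mN : lek m (meeti n (pdeg x)).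
  apply/lekP => i; move/leiP: mdx => /(_ i); move: (mn i); unf; case: (pdeg x i) => [v|] /=; plia.
have Ndx := meeti_le' n (pdeg x).
have sl' : src l = rng (pm y p Y) by rewrite sl gm_rng.
have degE := congr1 deg E1.
rewrite deg_comp // !gm_deg // dl in degE.
have degE' := pw degE.
have Hma : lei (addk m a) (pdeg x).
  apply/leiP => i; move: (mn i) (D' i) (pq i) (Hb' i) (pdy' i) (E2' i) (degE' i).
  rewrite /Y /B; unf; case: (pdeg x i) => [v|] /=; case: (pdeg y i) => [w|] /=; plia.
have maN : lek (addk m a) (meeti n (pdeg x)).
  apply/lekP => i; move/leiP: Hma => /(_ i); move: (mn i) (D' i); unf; case: (pdeg x i) => [v|] /=; plia.
have mma : lek m (addk m a) by apply/lekP => i; unf; plia.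
have E1' := etrans E1 (esym (gm_comp gx mma maN Ndx)).
have [e1 e2] := uniq2 sl' (etrans (gm_src gx mma Hma) (esym (gm_rng gx maN Ndx))) E1'
  (etrans dl (esym (etrans (gm_deg gx mma Hma) (funk (fun i => addKn _ _))))).
split => //.
rewrite /Defs.equivP (meeti_le pdy) (meeti_le Hma).
have -> : meeti q (pdeg y) = Y.
  apply: funk => i; move: (pq i) (pdy' i); rewrite /Y /B; unf; case: (pdeg y i) => [w|] /=; plia.
split => //.
- by apply: funk => i; unf; plia.
- by apply: funk => i; move: (mn i) (D' i) (pq i) (Hb' i); unf; plia.
Qed.


Lemma uniq_PP (x x' y : kpath L) m n a b m' n' p q :
  is_graph_morphism x -> is_graph_morphism x' -> is_graph_morphism y ->
  lek m n -> subk n m = addk a b ->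
  lek m' n' -> ~~ lei n' (pdeg x') -> lek p q -> subk n' m' = a -> subk q p = b ->
  equivV x' n' y p ->
  Defs.equivP (concat (pm x' (@zerok k) (meeti n' (pdeg x'))) (shift y (meeti p (pdeg y))))
     m' (subk (addk n' q) p) x m n ->
  [/\ ~~ lei (addk m a) (pdeg x), Defs.equivP x' m' n' x m (addk m a)
    & Defs.equivP y p q x (addk m a) n].
Proof.
move=> gx gx' gy /lekP mn D /lekP mn' nd' /lekP pq Ha Hb [eV1 eV2] [E1 E2 E3].
have D' := pw D; have Ha' := pw Ha; have Hb' := pw Hb; have eV2' := pw eV2.
set N' := meeti n' (pdeg x') in E1 E2 E3 eV1 eV2 eV2' *.
set s := meeti p (pdeg y) in E1 E2 E3 eV1 eV2 eV2' *.
have N0 : lek (@zerok k) N' by apply/lekP => i; unf.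
have Ndx' : lei N' (pdeg x') by exact: meeti_le'.
have du : deg (pm x' (@zerok k) N') = N'.
  by rewrite (gm_deg gx' N0 Ndx'); apply: funk => i; unf.
have dz : pdeg (concat (pm x' (@zerok k) N') (shift y s)) = addi N' (subi (pdeg y) s)
  by rewrite /= du.
rewrite dz in E1 E2.
have E2' := pw E2.
set A := meeti m' (addi N' (subi (pdeg y) s)) in E1 E2 E2' *.
set B := meeti (subk (addk n' q) p) (addi N' (subi (pdeg y) s)) in E1.
have AR := fun i => @arPP (m i) (n i) (a i) (b i) (m' i) (n' i) (p i) (q i)
  (pdeg x' i) (pdeg y i) (pdeg x i) (mn i) (D' i) (mn' i) (pq i) (Ha' i) (Hb' i) (eV2' i) (E2' i).
have AN : lek A N' by apply/lekP => i; case: (AR i).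
have NB : lek N' B.
  apply/lekP => i; case: (AR i) => _ h _ _ _; exact h.
have A0 : lek (@zerok k) A by apply/lekP => i; unf.
have Adx' : lei A (pdeg x') by apply: lei_trans AN Ndx'.
have H1 : lek (deg (pm x' (@zerok k) N')) B by rewrite du.
have H2 : lei (addk (subk B (deg (pm x' (@zerok k) N'))) s) (pdeg y).
  rewrite du; apply/leiP => i; case: (AR i) => _ _ h _ _; exact h.
have CP := @concat_pmap (pm x' (@zerok k) N') (pm x' (@zerok k) A) (pm x' A N') y s A B gy
  (etrans (gm_src gx' A0 Adx') (esym (gm_rng gx' AN Ndx'))) (gm_comp gx' A0 AN Ndx')
  (etrans (gm_src gx' AN Ndx') eV1) (etrans (gm_deg gx' A0 Adx') (funk (fun i => subn0 _))) H1 H2.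
rewrite CP du in E1.
rewrite du in H2.
set Y := addk (subk B N') s in E1 H2.
have sY : lek s Y by apply/lekP => i; rewrite /Y; unf; plia.
set M := meeti m (pdeg x) in E1 E2 E2' AR *.
set Nn := meeti n (pdeg x) in E1 *.
set R := meeti (addk m a) (pdeg x).
have MR : lek M R by apply/lekP => i; rewrite /M /R; unf; case: (pdeg x i) => [v|] /=; plia.
have RN : lek R Nn.
  by apply/lekP => i; move: (mn i) (D' i); rewrite /Nn /R; unf; case: (pdeg x i) => [v|] /=; plia.
have Ndx : lei Nn (pdeg x) by exact: meeti_le'.
have Rdx : lei R (pdeg x) by exact: meeti_le'.
have MN : lek M Nn by apply/lekP => i; move/lekP: MR => /(_ i); move/lekP: RN => /(_ i); plia.
have sl' : src (pm x' A N') = rng (pm y s Y) by rewrite (gm_src gx' AN Ndx') eV1 gm_rng.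
have degE := congr1 deg E1.
rewrite deg_comp // (gm_deg gx' AN Ndx') (gm_deg gy sY H2) (gm_deg gx MN Ndx) in degE.
have degE' := pw degE.
have AR6 : forall i, [/\ N' i - A i = R i - M i, p i - s i = addk m a i - R i &
      ~~ (if pdeg x' i is Some v then n' i <= v else true) ->
      ~~ (if pdeg x i is Some w then addk m a i <= w else true)].
  move=> i; case: (AR i) => _ _ _ _ [_ h]; exact: (h (degE' i)).
have G1 : subk N' A = subk R M by apply: funk => i; case: (AR6 i).
have E1' := etrans E1 (esym (gm_comp gx MR RN Ndx)).
have [e1 e2] := uniq2 sl' (etrans (gm_src gx MR Rdx) (esym (gm_rng gx RN Ndx))) E1'
  (etrans (gm_deg gx' AN Ndx') (etrans G1 (esym (gm_deg gx MR Rdx)))).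
split.
- move/forallPn: nd' => [i0 Hi0]; apply/forallPn; exists i0.
  by case: (AR6 i0) => _ _; apply.
- unfold Defs.equivP; have -> : meeti m' (pdeg x') = A by apply: funk => i; case: (AR i).
  split => //.
  by apply: funk => i; move: (Ha' i); unf; plia.
- unfold Defs.equivP; have -> : meeti q (pdeg y) = Y.
    apply: funk => i; case: (AR i) => _ _ _ _ [h _]; exact h.
  split => //.
  + by apply: funk => i; case: (AR6 i).
  + by apply: funk => i; move: (mn i) (D' i) (Hb' i); unf; plia.
Qed.

End Aux.

Theorem lemma3p23 (k : nat) (L : kgraph k) (f : Mbar L) (a b : Nk k) :
  mbar_valid f -> dbar f = addk a b ->
  exists g h : Mbar L,
    [/\ mbar_valid g /\ mbar_valid h, composable g h, mbar_eq (compbar g h) f,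
        dbar g = a & dbar h = b] /\
    forall g' h' : Mbar L,
      mbar_valid g' -> mbar_valid h' -> composable g' h' ->
      mbar_eq (compbar g' h') f -> dbar g' = a -> dbar h' = b ->
      mbar_eq g' g /\ mbar_eq h' h.
Proof.
case: f => [l | x m n] /= vf D.
- have [mu [nu [[h1 h2 h3 h4] U]]] := unique_fact D.
  exists (ML mu), (ML nu); split; first by split.
  move=> [l'|x' m' n'] [l2|y p q] _ _ /= c e d1 d2; try by case: e; try by case: c.
  by have [-> ->] := U l' l2 c e d1 d2.
- case: vf => bx [mn nd].
  have gx := bx.1.
  case Hma: (lei (addk m a) (pdeg x)).
  + exists (ML (pm x m (addk m a))), (MP x (addk m a) n); split; first exact: exists_ML.
    move=> [l'|x' m' n'] [l2|y p q] /= v1 v2 c e d1 d2; try by case: e; try by case: c.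
    * case: v2 => hy [pq _].
      move: c; rewrite /composable /=; case Hp: (lei p (pdeg y)) => /= c; last by case: c.
      have [_ e1 e2] := uniq_LP gx hy.1 mn D pq Hp c d1 d2 e.
      by split.
    * case: v1 => bx' [mn' nd']; case: v2 => hy [pq _].
      move: c; rewrite /composable /=; case Hp: (lei p (pdeg y)) => /= c; first by case: c.
      have [H _ _] := uniq_PP gx bx'.1 hy.1 mn D mn' nd' pq d1 d2 c e.
      by rewrite Hma in H.
  + exists (MP x m (addk m a)), (MP x (addk m a) n); split.
      by apply: exists_PP => //; rewrite Hma.
    move=> [l'|x' m' n'] [l2|y p q] /= v1 v2 c e d1 d2; try by case: e; try by case: c.
    * case: v2 => hy [pq _].
      move: c; rewrite /composable /=; case Hp: (lei p (pdeg y)) => /= c; last by case: c.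
      have [H _ _] := uniq_LP gx hy.1 mn D pq Hp c d1 d2 e.
      by rewrite Hma in H.
    * case: v1 => bx' [mn' nd']; case: v2 => hy [pq _].
      move: c; rewrite /composable /=; case Hp: (lei p (pdeg y)) => /= c; first by case: c.
      have [_ e1 e2] := uniq_PP gx bx'.1 hy.1 mn D mn' nd' pq d1 d2 c e.
      by split.
Qed.
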